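(* Consider $M+1$ base stations indexed $i\in\{0,1,\dots,M\}$ and a finite set $\mathcal{N}$ of users. For each base station $i$ and user $j$, let $\eta_{i,j}\in[0,1)$ be the SINR of user $j$ with respect to base station $i$, and let $B>0$ be the bandwidth. An assignment is a family $(U_0,\dots,U_M)$ of pairwise disjoint subsets of $\mathcal{N}$ ($U_i$ is the set of users served by base station $i$, $N_i=|U_i|$). Its total network capacity is $$C_{tot}(U_0,\dots,U_M)=\sum_{i:\,N_i>0}\frac{B}{N_i}\sum_{j\in U_i}\log_2\!\left(\frac{1}{1-\eta_{i,j}}\right),$$ and let $C_{NC}=\max C_{tot}(U_0,\dots,U_M)$, the maximum over all assignments (the network-capacity-maximizing scheme). Fix thresholds $\lambda_1<\lambda_2<\dots<\lambda_q$ and define the level $L_{i,j}=0$ if $\eta_{i,j}<\lambda_1$, $L_{i,j}=l$ if $\lambda_l\le\eta_{i,j}<\lambda_{l+1}$ for $l\in\{1,\dots,q-1\}$, and $L_{i,j}=q$ if $\eta_{i,j}\ge\lambda_q$. For an assignment, put $U_{i,l}=\{j\in U_i: L_{i,j}=l\}$, $N_{i,l}=|U_{i,l}|$, and let $\overline{\eta}_{i,l}$ be the arithmetic mean of $\{\eta_{i,j}: j\in U_{i,l}\}$ when $N_{i,l}>0$. Define the grouped capacity $$C_{UC}(U_0,\dots,U_M)=\sum_{i:\,N_i>0}B\sum_{l:\,N_{i,l}>0}\frac{N_{i,l}}{N_i}\log_2\!\left(\frac{1}{1-\overline{\eta}_{i,l}}\right).$$ Then for every assignment $(U_0,\dots,U_M)$,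 $C_{UC}(U_0,\dots,U_M)\le C_{NC}$; that is, $C_{NC}$ is an upper bound of $C_{UC}$.
   Context: Setting: downlink femtocell network with one macrocell base station (index $0$) and $M$ femtocell base stations; each user connects to at most one base station, and the bandwidth $B$ of a base station is divided equally among its $N_i$ served users, so a user $j$ served by station $i$ has capacity $\frac{B}{N_i}\log_2\frac{1}{1-\eta_{i,j}}$, where $\eta_{i,j}=|h_{i,j}|^2P_i/(\sigma^2+\sum_{l=0}^M|h_{l,j}|^2P_l)$ lies in $[0,1)$. $C_{UC}$ is the capacity of the proposed user-classification scheme, in which each user's SINR is replaced by the average SINR of its level group at its base station. *)

(* Defs.v *)
From HB Require Import structures.
From mathcomp Require Import all_boot all_order all_algebra.
From mathcomp Require Import reals exp.
Set Implicit Arguments. Unset Strict Implicit. Unset Printing Implicit Defensive.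
Import Order.TTheory GRing.Theory Num.Theory.
Local Open Scope ring_scope.

Definition log2 {R : realType} (x : R) : R := ln x / ln 2.

Definition capf {R : realType} (eta : R) : R := log2 (1 / (1 - eta)).

Definition is_assignment (M : nat) (N : finType) (U : 'I_M.+1 -> {set N}) : Prop :=
  forall i k : 'I_M.+1, i != k -> [disjoint U i & U k].

Definition Ctot {R : realType} (M : nat) (N : finType) (B : R)
    (eta : 'I_M.+1 -> N -> R) (U : 'I_M.+1 -> {set N}) : R :=
  \sum_(i < M.+1 | (0 < #|U i|)%N)
     B / (#|U i|)%:R * \sum_(j in U i) capf (eta i j).

(* C_NC: maximum of C_tot over all assignments (a finite set; the empty
   assignment, of capacity 0, is always one of them) *)
Definition CNC {R : realType} (M : nat) (N : finType) (B : R)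
    (eta : 'I_M.+1 -> N -> R) : R :=
  \big[Num.max/0]_(V : {ffun 'I_M.+1 -> {set N}} |
        [forall i, forall k, (i != k) ==> [disjoint V i & V k]])
     Ctot B eta V.

Definition level_cond {R : realType} (q : nat) (lam : nat -> R) (x : R) (l : nat) : bool :=
  [|| (l == 0%N) && (x < lam 1%N),
      [&& (1 <= l)%N, (l < q)%N, lam l <= x & x < lam l.+1]
    | (l == q) && (lam q <= x)].

Definition level {R : realType} (q : nat) (lam : nat -> R) (x : R) : nat :=
  odflt 0%N (omap (@nat_of_ord q.+1) [pick l : 'I_q.+1 | level_cond q lam x l]).

Definition Ugroup {R : realType} (M : nat) (N : finType) (q : nat) (lam : nat -> R)
    (eta : 'I_M.+1 -> N -> R) (U : 'I_M.+1 -> {set N}) (i : 'I_M.+1) (l : nat)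
    : {set N} :=
  [set j in U i | level q lam (eta i j) == l].

Definition etabar {R : realType} (M : nat) (N : finType) (q : nat) (lam : nat -> R)
    (eta : 'I_M.+1 -> N -> R) (U : 'I_M.+1 -> {set N}) (i : 'I_M.+1) (l : nat) : R :=
  (\sum_(j in Ugroup q lam eta U i l) eta i j) / (#|Ugroup q lam eta U i l|)%:R.

Definition CUC {R : realType} (M : nat) (N : finType) (B : R) (q : nat) (lam : nat -> R)
    (eta : 'I_M.+1 -> N -> R) (U : 'I_M.+1 -> {set N}) : R :=
  \sum_(i < M.+1 | (0 < #|U i|)%N)
     B * \sum_(l < q.+1 | (0 < #|Ugroup q lam eta U i l|)%N)
        ((#|Ugroup q lam eta U i l|)%:R / (#|U i|)%:R)
          * capf (etabar q lam eta U i l).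

(* Main.v *)
Require Import Defs.
From HB Require Import structures.
From mathcomp Require Import all_boot all_order all_algebra.
From mathcomp Require Import reals exp.
From mathcomp Require Import lra.
Import Order.TTheory GRing.Theory Num.Theory.
Local Open Scope ring_scope.

Lemma ln_le_sub1 {R : realType} (y : R) : 0 < y -> ln y <= y - 1.
Proof.
move=> y0; have := @le_ln1Dx R (y - 1).
rewrite [1 + _]addrC subrK; apply; lra.
Qed.

Lemma capfE {R : realType} (x : R) : x < 1 -> capf x = - ln (1 - x) / ln 2.
Proof.
move=> x1; rewrite /capf /log2 div1r lnV // posrE; lra.
Qed.

Lemma capf_ge0 {R : realType} (x : R) : 0 <= x < 1 -> 0 <= capf x.
Proof.
case/andP=> x0 x1; rewrite /capf /log2 divr_ge0 //; last first.
  by apply: ln_ge0; lra.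
apply: ln_ge0; rewrite div1r -[leLHS]invr1 lef_pV2 ?posrE; lra.
Qed.

Lemma jensen {R : realType} (N : finType) (S : {set N}) (x : N -> R) :
  (forall j, 0 <= x j < 1) -> (0 < #|S|)%N ->
  #|S|%:R * capf ((\sum_(j in S) x j) / #|S|%:R) <= \sum_(j in S) capf (x j).
Proof.
move=> hx hS.
set n : R := #|S|%:R.
have n0 : 0 < n by rewrite ltr0n.
set a : R := (\sum_(j in S) (1 - x j)) / n.
have ha : 1 - (\sum_(j in S) x j) / n = a.
  rewrite /a sumrB sumr_const mulrBl.
  have -> : (1 *+ #|S| : R) = n by [].
  by rewrite mulfV ?gt_eqF.
have a0 : 0 < a.
  rewrite /a divr_gt0 //; case/card_gt0P: hS => j0 Hj0.
  rewrite (bigD1 j0) //=; apply: ltr_pwDl.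
    by have := hx j0; lra.
  by apply: sumr_ge0 => j _; have := hx j; lra.
have xlt : (\sum_(j in S) x j) / n < 1 by rewrite -subr_gt0 ha.
rewrite capfE // ha.
have hc j : capf (x j) = - ln (1 - x j) / ln 2.
  by rewrite capfE //; have := hx j; lra.
rewrite (eq_bigr _ (fun j _ => hc j)).
rewrite -mulr_suml mulrA ler_wpM2r //.
  by rewrite invr_ge0 ln_ge0 // ler1n.
idtac.
rewrite sumrN mulrN lerN2.
have : \sum_(j in S) (ln (1 - x j) - ln a) <= 0.
  apply: le_trans (_ : \sum_(j in S) ((1 - x j) / a - 1) <= 0).
    apply: ler_sum => j _; rewrite -ln_div ?posrE //; last by have := hx j; lra.
    apply: ln_le_sub1; apply: divr_gt0 => //; have := hx j; lra.
  rewrite sumrB -mulr_suml sumr_const -/n.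
  have -> : \sum_(i in S) (1 - x i) = a * n by rewrite /a mulfVK ?gt_eqF.
  by rewrite [a * n]mulrC mulfK ?gt_eqF // subrr.
by rewrite sumrB sumr_const subr_le0 -mulr_natl.
Qed.

Lemma le_bigmax_seq {R : realType} (T : eqType) (r : seq T) (P : pred T) (F : T -> R) x :
  x \in r -> P x -> F x <= \big[Num.max/0]_(v <- r | P v) F v.
Proof.
elim: r => [//|y r IH]; rewrite inE big_cons => /orP [/eqP <- Px|xr Px].
  by rewrite Px le_max lexx.
case: (P y); last exact: IH.
by rewrite le_max IH ?orbT.
Qed.

Lemma level_le {R : realType} q (lam : nat -> R) x : (level q lam x <= q)%N.
Proof.
rewrite /level; case: pickP => [l _|_] //=.
by rewrite -ltnS ltn_ord.
Qed.

Theorem lemma1 (R : realType) (M : nat) (N : finType) (B : R)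
    (eta : 'I_M.+1 -> N -> R) (q : nat) (lam : nat -> R)
    (U : 'I_M.+1 -> {set N}) :
  0 < B ->
  (forall i j, 0 <= eta i j /\ eta i j < 1) ->
  (0 < q)%N ->
  (forall l, (1 <= l)%N -> (l < q)%N -> lam l < lam l.+1) ->
  is_assignment U ->
  CUC B q lam eta U <= CNC B eta.
Proof.
move=> B0 heta _ _ hU.
have hx i j : 0 <= eta i j < 1 by case: (heta i j) => -> ->.
apply: (@le_trans _ _ (Ctot B eta U)).
  rewrite /CUC /Ctot; apply: ler_sum => i hi.
  set n : R := #|U i|%:R.
  have n0 : 0 < n by rewrite ltr0n.
  rewrite -mulrA; apply: ler_wpM2l; first exact: ltW.
  rewrite mulrC.
  set G := Ugroup q lam eta U i.
  apply: (@le_trans _ _ (\sum_(l < q.+1) (\sum_(j in G l) capf (eta i j)) / n)).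
    rewrite [X in _ <= X](bigID (fun l : 'I_q.+1 => (0 < #|G l|)%N)) /=.
    rewrite -[leLHS]addr0; apply: lerD.
      apply: ler_sum => l hl; rewrite mulrAC; apply: ler_wpM2r.
        by rewrite invr_ge0 ltW.
      exact: jensen.
    apply: sumr_ge0 => l _; apply: divr_ge0; last exact: ltW.
    by apply: sumr_ge0 => j _; apply: capf_ge0.
  rewrite -mulr_suml; apply: ler_wpM2r; first by rewrite invr_ge0 ltW.
  rewrite (partition_big (fun j => (inord (level q lam (eta i j)) : 'I_q.+1)) predT) //=.
  rewrite le_eqVlt; apply/orP; left; apply/eqP.
  apply: eq_bigr => l _; apply: eq_bigl => j.
  rewrite /G /Ugroup inE; congr (_ && _).
  by rewrite -val_eqE /= inordK // ltnS level_le.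
have -> : Ctot B eta U = Ctot B eta [ffun i => U i].
  by rewrite /Ctot; apply: eq_big => i; rewrite ffunE.
rewrite /CNC; apply: le_bigmax_seq; first exact: mem_index_enum.
apply/forallP => i; apply/forallP => k; apply/implyP => ik.
by rewrite !ffunE; apply: hU.
Qed.
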